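(* Let $\mathbb{I}=(I_n:n\in\omega)$ and $\mathbb{J}=(J_k:k\in\omega)$ be interval partitions of $\omega$ and $x,y\in 2^\omega$, and suppose $|J_k|\ge 2$ for every $k$. Then the following are equivalent: (1) $\mathrm{Match}(x,\mathbb{I})\not\subseteq\mathrm{Match}(y,\mathbb{J})$; (2) $|\mathrm{Match}(x,\mathbb{I})\setminus\mathrm{Match}(y,\mathbb{J})|=\mathfrak{c}$; (3) there are infinitely many $n$ such that for every $k$, either $J_k\not\subseteq I_n$ or $x\restriction J_k\neq y\restriction J_k$.
   Context: An interval partition of $\omega$ is a sequence of consecutive finite nonempty intervals covering $\omega$. For an interval partition $\mathbb{I}=(I_n)$ and $x\in2^\omega$, $\mathrm{Match}(x,\mathbb{I})=\{y\in 2^\omega : x\restriction I_n=y\restriction I_n \text{ for infinitely many } n\}$. $\mathfrak{c}=2^{\aleph_0}$. *)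

(* Defs.v *)
From mathcomp Require Import all_boot.
From mathcomp Require Import boolp classical_sets functions cardinality.
Set Implicit Arguments. Unset Strict Implicit. Unset Printing Implicit Defensive.
Local Open Scope classical_set_scope.

(* An interval partition of omega is encoded by its sequence of left endpoints
   a : nat -> nat with a 0 = 0 and a strictly increasing; the n-th interval is
   I_n = [a n, a (n+1)). These intervals are consecutive, finite, nonempty and
   cover omega; conversely every interval partition arises this way. *)
Definition interval_partition (a : nat -> nat) : Prop :=
  a 0 = 0 /\ forall n, a n < a n.+1.

Definition ipart (a : nat -> nat) (n : nat) : set nat :=
  [set i | a n <= i < a n.+1].

Definition agree_on (I : set nat) (x y : nat -> bool) : Prop :=
  forall i, I i -> x i = y i.

Definition Match (x : nat -> bool) (a : nat -> nat) : set (nat -> bool) :=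
  [set y | forall N, exists2 n, N <= n & agree_on (ipart a n) x y].

(* Main.v *)
Require Import Defs.
From mathcomp Require Import all_boot.
From mathcomp Require Import boolp classical_sets functions cardinality.
From mathcomp Require Import zify.
Local Open Scope classical_set_scope.
Local Open Scope card_scope.

Lemma sinc_le {f : nat -> nat} : (forall n, f n < f n.+1) ->
  {mono f : m n / m <= n}.
Proof. by move=> h; apply: leq_mono; apply: homo_ltn => //; exact: ltn_trans. Qed.

Lemma sinc_lt {f : nat -> nat} : (forall n, f n < f n.+1) ->
  {mono f : m n / m < n}.
Proof. by move=> h; apply: leqW_mono; exact: sinc_le. Qed.

Lemma sinc_inj {f : nat -> nat} : (forall n, f n < f n.+1) -> injective f.
Proof. by move=> h; apply: incn_inj; exact: sinc_le. Qed.

Lemma sinc_ge {f : nat -> nat} : (forall n, f n < f n.+1) -> forall n, n <= f n.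
Proof. by move=> h; elim=> // n IH; apply: leq_ltn_trans IH (h n). Qed.

Lemma ipart_uniq {a : nat -> nat} : (forall n, a n < a n.+1) ->
  forall n n' i, ipart a n i -> ipart a n' i -> n = n'.
Proof.
move=> h n n' i /andP[h1 h2] /andP[h3 h4].
case: (ltngtP n n') => hn //.
  have : a n.+1 <= a n' by rewrite (sinc_le h).
  lia.
have : a n'.+1 <= a n by rewrite (sinc_le h).
lia.
Qed.

Lemma not_left {b : nat -> nat} : (forall n, b n < b n.+1) ->
  forall k k', b k < b k' -> b k' < b k.+1 -> False.
Proof. by move=> h k k'; rewrite !(sinc_lt h); lia. Qed.

Theorem mainTheorem13 (a b : nat -> nat) (x y : nat -> bool) :
  interval_partition a -> interval_partition b ->
  (forall k, 2 <= b k.+1 - b k) ->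
  [/\ (~ (Match x a `<=` Match y b) <->
       ((Match x a `\` Match y b) #= [set: nat -> bool])),
      (((Match x a `\` Match y b) #= [set: nat -> bool]) <->
       (forall N, exists2 n, N <= n &
          forall k, ~ (ipart b k `<=` ipart a n) \/ ~ agree_on (ipart b k) x y))
    & ((forall N, exists2 n, N <= n &
          forall k, ~ (ipart b k `<=` ipart a n) \/ ~ agree_on (ipart b k) x y) <->
       ~ (Match x a `<=` Match y b))].
Proof.
move=> [_ ainc] [_ binc] b2.
set Pn := fun n => forall k, ~ (ipart b k `<=` ipart a n) \/ ~ agree_on (ipart b k) x y.
set P3 := forall N, exists2 n, N <= n & Pn n.
have ha := sinc_ge ainc; have hb := sinc_ge binc.
have h13 : ~ (Match x a `<=` Match y b) -> P3.
  move=> nsub; apply: contrapT => nP3.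
  have [N HN] : exists N, forall n, N <= n ->
      exists k, (ipart b k `<=` ipart a n) /\ agree_on (ipart b k) x y.
    apply: contrapT => nE; apply: nP3 => N; apply: contrapT => nE2.
    apply: nE; exists N => n Nn; apply: contrapT => nE3.
    apply: nE2; exists n => // k; apply/not_andP => hk; apply: nE3; by exists k.
  apply: nsub => z zA K.
  have [n Nn agn] := zA (maxn N (b K)).
  have [k [Jk agk]] := HN n (leq_trans (leq_maxl _ _) Nn).
  have bkJ : ipart b k (b k) by rewrite /ipart /= leqnn binc.
  have := Jk _ bkJ; rewrite /ipart /= => /andP[h1 _].
  exists k.
    rewrite -(sinc_le binc); apply: leq_trans h1.
    apply: leq_trans (ha n); exact: leq_trans (leq_maxr _ _) Nn.
  by move=> i Ji; rewrite -(agk i Ji); apply: agn; apply: Jk.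
have h32 : P3 -> (Match x a `\` Match y b) #= [set: nat -> bool].
  move=> hP3.
  have [g Hg] : {g & forall N, N <= g N /\ Pn (g N)}.
    apply: (@choice _ _ (fun N n => N <= n /\ Pn n)) => N; have [n ? ?] := hP3 N; by exists n.
  pose F n := g (b (a n.+1).+1).
  pose m j := iter j F (g 0).
  have mS j : m j.+1 = F (m j) by [].
  have mP j : Pn (m j) by case: j => [|j]; rewrite ?mS; apply: (Hg _).2.
  have mgap j : b (a (m j).+1).+1 <= m j.+1 by rewrite mS; apply: (Hg _).1.
  have minc j : (m j).+2 <= m j.+1.
    apply: leq_trans (mgap j); have := hb (a (m j).+1).+1; have := ha (m j).+1.
    lia.
  have msinc j : m j < m j.+1 by apply: leq_trans (minc j).
  have G j i : a (m j).+1 <= i < a (m j.+1) -> forall j', ~ ipart a (m j') i.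
    move=> /andP[h1 h2] j' /andP[h3 h4].
    case: (leqP j' j) => hj.
      have : (m j').+1 <= (m j).+1 by rewrite ltnS (sinc_le msinc).
      rewrite -(sinc_le ainc); lia.
    have : m j.+1 <= m j' by rewrite (sinc_le msinc).
    rewrite -(sinc_le ainc); lia.
  pose p j := b (a (m j).+1).
  have pinj : injective p.
    move=> j j' /(sinc_inj binc) /(sinc_inj ainc) [] /(sinc_inj msinc).
    done.
  pose inC i := exists j, ipart a (m j) i.
  pose isP i := exists j, p j = i.
  pose z (s : nat -> bool) i := if `[< inC i >] then x i
     else if `[< isP i >] then `[< exists j, p j = i /\ s j >] else ~~ y i.
  have pnC j : ~ inC (p j).
    move=> [j' Hj']; apply: (G j (p j) _ j' Hj').
    apply/andP; split; first exact: hb.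
    apply: leq_trans (binc _) _; apply: leq_trans (mgap j) _; exact: ha.
  have zp s j : z s (p j) = s j.
    rewrite /z /=; case: (asboolP (inC (p j))) => [/pnC //|_].
    case: (asboolP (isP (p j))) => [_|nP]; last by exfalso; apply: nP; exists j.
    case: asboolP => [[j' [e sj']]|ns]; first by rewrite -(pinj _ _ e).
    by apply/esym/negbTE/negP => sj; apply: ns; exists j.
  have zinj : {in [set: nat -> bool] &, injective z}.
    move=> s t _ _ e; apply: funext => j.
    by rewrite -(zp s j) -(zp t j) e.
  have zA s : Match x a (z s).
    move=> N; exists (m N); first exact: (sinc_ge msinc).
    move=> i Hi; rewrite /z /=; case: (asboolP (inC i)) => // nC; exfalso; apply: nC.
    by exists N.
  have zB s : ~ Match y b (z s).
    move=> H; have [k _ Hag] := H 0.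
    have notz i : ipart b k i -> z s i = ~~ y i -> False.
      by move=> Ji; rewrite -(Hag i Ji); case: (y i).
    case: (pselect (exists j, ipart b k `<=` ipart a (m j))) => [[j Hj]|nJ].
      case: (mP j k) => // hn; apply: hn => i Ji.
      rewrite (Hag i Ji) /z /=; case: (asboolP (inC i)) => // nC; exfalso; apply: nC.
      by exists j; apply: Hj.
    case: (asboolP (inC (b k))) => [[j /andP[h1 h2]]|nC].
      have h3 : a (m j).+1 < b k.+1.
        rewrite ltnNge; apply/negP => h4; apply: nJ; exists j.
        move=> i /andP[i1 i2]; apply/andP; split; lia.
      apply: (notz (a (m j).+1)); first by rewrite /ipart /=; lia.
      rewrite /z /=; case: (asboolP (inC (a (m j).+1))) => [[j' Hj']|_].
        have e : m j' = (m j).+1.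
          by apply: (ipart_uniq ainc _ _ _ Hj'); rewrite /ipart /= leqnn ainc.
        exfalso; case: (leqP j' j) => hj.
          have : m j' <= m j by rewrite (sinc_le msinc).
          lia.
        have : m j.+1 <= m j' by rewrite (sinc_le msinc).
        have := minc j; lia.
      case: (asboolP (isP (a (m j).+1))) => [[j' Hj']|//]; exfalso; rewrite /p in Hj'.
      apply: (not_left binc k (a (m j').+1)).
        by rewrite Hj'.
      by rewrite Hj'.
    case: (asboolP (isP (b k))) => [[j Hj]|nP]; last first.
      apply: (notz (b k)); first by rewrite /ipart /= leqnn binc.
      by rewrite /z /=; case: (asboolP (inC (b k))) => // _; case: (asboolP (isP (b k))).
    have ek : a (m j).+1 = k by apply: (sinc_inj binc).
    have bk2 := b2 k.
    apply: (notz (b k).+1); first by rewrite /ipart /=; lia.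
    rewrite /z /=; case: (asboolP (inC (b k).+1)) => [[j' Hj']|_].
      exfalso; apply: (G j (b k).+1 _ j' Hj').
      apply/andP; split.
        rewrite ek; apply: leq_trans (hb k) _; exact: leqnSn.
      have := b2 (a (m j).+1); have := mgap j; have := ha (m j.+1); rewrite -ek; lia.
    case: (asboolP (isP (b k).+1)) => [[j' Hj']|//]; exfalso; rewrite /p in Hj'.
    apply: (not_left binc k (a (m j').+1)); rewrite Hj'; lia.
  apply/card_eqPle; split; first exact: card_leT.
  apply: (card_le_trans (B := z @` [set: nat -> bool])).
    by have := inj_card_eq zinj; rewrite card_eq_le => /andP[].
  apply: subset_card_le => _ [s _ <-]; split; [exact: zA | exact: zB].
have h21 : (Match x a `\` Match y b) #= [set: nat -> bool] ->
    ~ (Match x a `<=` Match y b).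
  move=> /card_eqPle[_ H] sub.
  have e : Match x a `\` Match y b = set0.
    by apply/seteqP; split => // z [zA zB]; apply: zB; apply: sub.
  rewrite e in H; move/card_le0P: H => H.
  have : [set: nat -> bool] (fun _ => true) by [].
  by rewrite H.
split; split; tauto.
Qed.
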